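(* Let $V$ be an integral, unimodular, symmetric, positive definite $m\times m$ matrix. Then for every $x\in\mathbb{Z}^m$, $$|x|\le \lVert V^{-1}\rVert_1\,(x^TVx).$$
   Context: $|x|$ denotes the Euclidean norm of $x$. For a real $m\times m$ matrix $A=(a_{ij})$, $\lVert A\rVert_1=\max_j\sum_{i=1}^m|a_{ij}|$ is the operator norm with respect to the $\ell^1$-norm. Unimodular means determinant $\pm1$. *)

(* Defs.v *)
From HB Require Import structures.
From mathcomp Require Import all_boot all_order all_algebra.
Set Implicit Arguments. Unset Strict Implicit. Unset Printing Implicit Defensive.
Import Order.TTheory GRing.Theory Num.Theory.
Local Open Scope ring_scope.

Definition eucl_norm (R : rcfType) (m : nat) (x : 'rV[R]_m) : R :=
  Num.sqrt (\sum_(i < m) x 0 i ^+ 2).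

(* Operator norm w.r.t. l^1: max_j sum_i |a_ij| (max column absolute sum). *)
Definition norm1 (R : rcfType) (m : nat) (A : 'M[R]_m) : R :=
  \big[Num.max/0]_(j < m) \sum_(i < m) `|A i j|.

Definition qform (R : comRingType) (m : nat) (A : 'M[R]_m) (x : 'rV[R]_m) : R :=
  (x *m A *m x^T) 0 0.

Definition posdef (R : rcfType) (m : nat) (A : 'M[R]_m) : Prop :=
  forall x : 'rV[R]_m, x != 0 -> 0 < qform A x.

(* Main.v *)
Require Import Defs.
From HB Require Import structures.
From mathcomp Require Import all_boot all_order all_algebra.
From mathcomp Require Import ring lra zify.
Import Order.TTheory GRing.Theory Num.Theory.
Local Open Scope ring_scope.

Lemma key (R : rcfType) m (A W : 'M[R]_m) (x : 'rV[R]_m) (t : R) :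
  A^T = A -> W *m A = 1%:M ->
  qform A (x - t *: (x *m W)) =
  qform A x - 2 * t * (x *m x^T) 0 0 + t ^+ 2 * (x *m (x *m W)^T) 0 0.
Proof.
move=> AT WA; set w := x *m W.
have wA : w *m A = x by rewrite /w -mulmxA WA mulmx1.
have xAw : (x *m A *m w^T) 0 0 = (x *m x^T) 0 0.
  have -> : (x *m A *m w^T) 0 0 = ((x *m A *m w^T)^T) 0 0 by rewrite [RHS]mxE.
  by rewrite trmx_mul trmxK trmx_mul AT mulmxA wA.
rewrite /qform.
have -> : (x - t *: w)^T = x^T - t *: w^T by apply/matrixP => i j; rewrite !mxE.
rewrite mulmxBl -!scalemxAl wA !mulmxBl !mulmxBr -!scalemxAl -!scalemxAr.
rewrite -/w. move: xAw. set a := x *m A *m x^T. set b := x *m A *m w^T. set c := x *m x^T. set d := x *m w^T.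
clearbody a b c d. move=> xAw.
rewrite !mxE xAw; ring.
Qed.

Lemma pbound (R : rcfType) m (W : 'M[R]_m) (x : 'rV[R]_m) :
  W^T = W ->
  (x *m (x *m W)^T) 0 0 <= norm1 W * \sum_(i < m) x 0 i ^+ 2.
Proof.
move=> WT.
have colb j : \sum_(i < m) `|W i j| <= norm1 W.
  by rewrite /norm1; exact: (le_bigmax _ (fun j => \sum_(i < m) `|W i j|) j).
have e : (x *m (x *m W)^T) 0 0 = \sum_j \sum_i x 0 j * x 0 i * W i j.
  rewrite !mxE; apply: eq_bigr => j _; rewrite !mxE big_distrr /=.
  by apply: eq_bigr => i _; rewrite mulrA.
rewrite e.
apply: (@le_trans _ _ (\sum_j \sum_i (`|W i j| * x 0 i ^+ 2 + `|W i j| * x 0 j ^+ 2) / 2)).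
  apply: ler_sum => j _; apply: ler_sum => i _.
  have h1 : x 0 j * x 0 i * W i j <= `|x 0 j| * `|x 0 i| * `|W i j|.
    by rewrite -!normrM real_ler_norm ?num_real.
  have h2 : `|x 0 i| ^+ 2 = x 0 i ^+ 2 by rewrite real_normK ?num_real.
  have h3 : `|x 0 j| ^+ 2 = x 0 j ^+ 2 by rewrite real_normK ?num_real.
  have h4 : 0 <= `|W i j| by [].
  rewrite -h2 -h3.
  have h5 : 0 <= (`|x 0 j| - `|x 0 i|) ^+ 2 by rewrite sqr_ge0.
  nra.
have S1 : \sum_j \sum_i `|W i j| * x 0 j ^+ 2 <= norm1 W * \sum_i x 0 i ^+ 2.
  rewrite big_distrr /=; apply: ler_sum => j _.
  rewrite -big_distrl /= mulrC [X in _ <= X]mulrC; apply: ler_wpM2l; [exact: sqr_ge0 | exact: colb].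
have S2 : \sum_j \sum_i `|W i j| * x 0 i ^+ 2 <= norm1 W * \sum_i x 0 i ^+ 2.
  rewrite exchange_big big_distrr /=; apply: ler_sum => i _.
  rewrite -big_distrl /= mulrC [X in _ <= X]mulrC; apply: ler_wpM2l; first exact: sqr_ge0.
  apply: le_trans (colb i); apply: ler_sum => j _.
  by rewrite -{1}WT mxE.
rewrite [X in X <= _](_ : _ = 
   ((\sum_j \sum_i `|W i j| * x 0 i ^+ 2) + (\sum_j \sum_i `|W i j| * x 0 j ^+ 2)) / 2).
  rewrite ler_pdivrMr // mulr_natr mulr2n; exact: lerD S2 S1.
  rewrite -big_split /= mulr_suml; apply: eq_bigr => j _.
  by rewrite -big_split /= mulr_suml.
Qed.


Theorem lemma6p6 (R : rcfType) (m : nat) (V : 'M[int]_m)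
  (Hsym : V^T = V)
  (Hunimod : \det V = 1 \/ \det V = -1)
  (Hpd : posdef (map_mx intr V : 'M[R]_m)) :
  forall x : 'rV[int]_m,
    eucl_norm (map_mx intr x : 'rV[R]_m)
      <= norm1 (invmx (map_mx intr V : 'M[R]_m)) * (qform V x)%:~R.
Proof.
move=> x.
set A : 'M[R]_m := map_mx intr V.
set xr : 'rV[R]_m := map_mx intr x.
have AT : A^T = A by rewrite /A map_trmx Hsym.
have Au : A \in unitmx.
  rewrite unitmxE det_map_mx; case: Hunimod => ->; by rewrite ?rmorphN rmorph1 ?unitrN unitr1.
set W := invmx A.
have WA : W *m A = 1%:M by rewrite /W mulVmx.
have WT : W^T = W by rewrite /W trmx_inv AT.
have psd v : 0 <= qform A v.
  have [->|nz] := eqVneq v 0; last exact/ltW/Hpd.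
  by rewrite /qform mul0mx mul0mx mxE.
have Hq : (qform V x)%:~R = qform A xr :> R.
  have E : map_mx intr (x *m V *m x^T) = xr *m A *m xr^T :> 'M[R]_1.
    by rewrite !map_mxM map_trmx.
  by rewrite /qform -E [RHS]mxE.
rewrite Hq.
set q := qform A xr.
have q0 : 0 <= q := psd xr.
set s := \sum_(i < m) xr 0 i ^+ 2.
have Hs : (xr *m xr^T) 0 0 = s.
  by rewrite mxE; apply: eq_bigr => i _; rewrite [in X in _ * X]mxE expr2.
set N := norm1 W.
have N0 : 0 <= N.
  rewrite /N /norm1; apply: (big_ind (fun y : R => 0 <= y)) => //.
    by move=> a b ha hb; rewrite le_max ha.
  by move=> j _; apply: sumr_ge0 => i _.
set p := (xr *m (xr *m W)^T) 0 0.
have pN : p <= N * s := @pbound R m W xr WT.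
have p0 : 0 <= p.
  have := psd (xr *m W).
  by rewrite /qform -(mulmxA xr W A) WA mulmx1.
have Hk t : 0 <= q - 2 * t * s + t ^+ 2 * p.
  by rewrite -Hs -(@key R m A W xr t AT WA); apply: psd.
have [k k0 sk] : exists2 k : int, 0 <= k & s = k%:~R.
  exists (\sum_(i < m) x 0 i ^+ 2); first by apply: sumr_ge0 => i _; rewrite sqr_ge0.
  rewrite /s rmorph_sum; apply: eq_bigr => i _; by rewrite /xr mxE rmorphXn.
rewrite /eucl_norm -/s.
have [k00|kpos] := eqVneq k 0.
  by rewrite sk k00 sqrtr0 mulr_ge0.
have s1 : 1 <= s by rewrite sk ler1z; lia.
have sq : Num.sqrt s <= s.
  have r0 : 0 <= Num.sqrt s := sqrtr_ge0 s.
  have r2 : Num.sqrt s ^+ 2 = s by rewrite sqr_sqrtr // (le_trans ler01 s1).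
  nra.
apply: le_trans sq _.
have [N00|Npos] := eqVneq N 0.
  have pz : p = 0 by apply/le_anti; rewrite p0 andbT; move: pN; rewrite N00 mul0r.
  have s0 : s != 0 by rewrite gt_eqF // (lt_le_trans ltr01 s1).
  have := Hk ((q + 1) / s); rewrite pz mulr0 addr0 -mulrA -(mulrA (q + 1)) mulVf // mulr1.
  lra.
have Ng : 0 < N by rewrite lt_neqAle eq_sym Npos N0.
have := Hk N^-1.
move=> h.
have h2 : 0 <= N ^+ 2 * (q - 2 * N^-1 * s + N^-1 ^+ 2 * p) by rewrite mulr_ge0 ?sqr_ge0.
have e : N ^+ 2 * (q - 2 * N^-1 * s + N^-1 ^+ 2 * p) = N * (N * q) - 2 * (N * s) + p.
  by field.
rewrite e in h2.
have h3 : 0 <= N * (N * q - s) by rewrite mulrBr; lra.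
rewrite -subr_ge0; by rewrite pmulr_rge0 in h3.
Qed.
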